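(* Let $\mathscr{C}=\left\{\sum_{i=1}^{\infty} t_i 3^{-i} : t_i\in\{0,2\}\right\}$ be the middle-third Cantor set. Then \[\left[\left(\tfrac{8}{9}\right)^{3},\tfrac{8}{9}\right]\subseteq \mathscr{C}\cdot\mathscr{C}\cdot\mathscr{C}\cdot\mathscr{C}=\{abcd : a,b,c,d\in\mathscr{C}\}.\] *)

(* Defs.v *)
From Stdlib Require Import Reals.
Open Scope R_scope.

(* Middle-third Cantor set: x = sum_{i>=1} t_i 3^{-i}, t_i in {0,2}.
   Indices shifted: t : nat -> R, term i (i >= 0) is t i / 3^(i+1). *)
Definition cantor (x : R) : Prop :=
  exists t : nat -> R,
    (forall i, t i = 0 \/ t i = 2) /\
    infinite_sum (fun i => t i / 3 ^ (S i)) x.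

(* Main.v *)
Require Import Defs.
From Stdlib Require Import Reals Lra Lia Psatz.
Open Scope R_scope.

Lemma term_eq (t : nat -> R) i : t i / 3 ^ S i = t i * (/3) ^ S i.
Proof. unfold Rdiv. rewrite pow_inv. reflexivity. Qed.

Lemma q_pos n : 0 < (/3) ^ n.
Proof. apply pow_lt. lra. Qed.

Lemma q_S n : (/3) ^ S n = (/3)^n / 3.
Proof. simpl. field. Qed.

Lemma series_bound (t : nat -> R) : (forall i, t i = 0 \/ t i = 2) ->
  exists a, infinite_sum (fun i => t i / 3 ^ S i) a /\
   forall m, sum_f_R0 (fun i => t i / 3 ^ S i) m <= a <=
             sum_f_R0 (fun i => t i / 3 ^ S i) m + (/3) ^ S m.
Proof.
  intros Ht.
  set (u := sum_f_R0 (fun i => t i / 3 ^ S i)).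
  assert (Hf : forall i, 0 <= t i / 3 ^ S i <= 2 * (/3) ^ S i).
  { intro i. rewrite term_eq. pose proof (q_pos (S i)).
    destruct (Ht i) as [-> | ->]; nra. }
  assert (Hg : Un_growing u).
  { intro n. unfold u. cbn [sum_f_R0]. pose proof (Hf (S n)). lra. }
  assert (Hb : forall m k, u (k + m)%nat <= u m + (/3) ^ S m - (/3) ^ S (k + m)).
  { intros m k. induction k as [|k IH].
    - simpl. lra.
    - replace (S k + m)%nat with (S (k + m)) by lia.
      unfold u in *. cbn [sum_f_R0]. pose proof (Hf (S (k+m))).
      rewrite (q_S (S (k+m))) in *. lra. }
  assert (Hub : has_ub u).
  { exists (u 0%nat + (/3) ^ 1). intros r [n ->].
    pose proof (Hb 0%nat n) as H. rewrite Nat.add_0_r in H.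
    pose proof (q_pos (S n)). lra. }
  destruct (growing_cv u Hg Hub) as [a Ha].
  exists a. split; [exact Ha|].
  intro m. split.
  - apply (growing_ineq u a Hg Ha).
  - destruct (Rle_dec a (u m + (/3) ^ S m)) as [H|H]; [exact H|].
    exfalso. destruct (Ha (a - (u m + (/3) ^ S m))) as [N HN]; [lra|].
    specialize (HN (N + m)%nat ltac:(lia)).
    pose proof (Hb m N). pose proof (q_pos (S (N+m))).
    unfold Rdist in HN. apply Rabs_def2 in HN. lra.
Qed.

Lemma one_cantor : cantor 1.
Proof.
  destruct (series_bound (fun _ => 2)) as [a [Ha Hb]]; [auto|].
  assert (Hs : forall m, sum_f_R0 (fun i => 2 / 3 ^ S i) m = 1 - (/3) ^ S m).
  { induction m as [|m IH]; cbn [sum_f_R0].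
    - simpl. field.
    - rewrite IH. unfold Rdiv. rewrite <- pow_inv, (q_S (S m)). field. }
  assert (a = 1).
  { destruct (Req_dec a 1) as [E|E]; [exact E|exfalso].
    destruct (pow_lt_1_zero (/3) ltac:(rewrite Rabs_pos_eq; lra) (Rabs (a - 1)))
      as [N HN]; [apply Rabs_pos_lt; lra|].
    specialize (HN (S N) ltac:(lia)). specialize (Hb N).
    rewrite Hs in Hb. rewrite Rabs_pos_eq in HN by (apply Rlt_le, q_pos).
    pose proof (q_pos (S N)).
    destruct (Rle_dec a 1).
    - rewrite Rabs_left1 in HN; lra.
    - rewrite Rabs_pos_eq in HN; lra. }
  subst a. exists (fun _ => 2). split; auto.
Qed.

Definition nxt (x l s B : R) : R :=
  l + (if Rle_dec x ((l + s/3) * B) then 0 else 2) * s / 3.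

Lemma nxt_digit x l s B : exists c, (c = 0 \/ c = 2) /\ nxt x l s B = l + c * s / 3.
Proof. unfold nxt. destruct Rle_dec; eexists; split; [left|reflexivity|right|reflexivity]; reflexivity. Qed.

Lemma nxt_ok x l s A B : 0 < s -> l * A <= x <= (l + s) * B ->
  (l + 2*s/3) * A <= (l + s/3) * B ->
  nxt x l s B * A <= x <= (nxt x l s B + s/3) * B.
Proof.
  intros Hs H1 H2. unfold nxt. destruct Rle_dec as [H|H]; split; nra.
Qed.

Fixpoint st (x : R) (m : nat) : R * R * R :=
  match m with
  | O => (2/3, 2/3, 2/3)
  | S k => let '(l1, l2, l3) := st x k in
           let s := (/3) ^ S k in
           let l1' := nxt x l1 s ((l2 + s) * (l3 + s)) in
           let l2' := nxt x l2 s ((l1' + s/3) * (l3 + s)) in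
           (l1', l2', nxt x l3 s ((l1' + s/3) * (l2' + s/3)))
  end.

Definition inv (x l1 l2 l3 s : R) : Prop :=
  2/3 <= l1 /\ 2/3 <= l2 /\ 2/3 <= l3 /\ l1 + s <= 1 /\ l2 + s <= 1 /\ l3 + s <= 1 /\
  l1 * l2 * l3 <= x <= (l1 + s) * (l2 + s) * (l3 + s).

Lemma nxt_range x l s B : 0 < s -> l <= nxt x l s B /\ nxt x l s B + s/3 <= l + s.
Proof. intros. unfold nxt. destruct Rle_dec; lra. Qed.

Lemma ov1 a b c s : 0 < s -> 2/3 <= a -> 2/3 <= b -> 2/3 <= c -> c <= 1 -> b <= 1 ->
  (a + 2*s/3) * (b * c) <= (a + s/3) * ((b + s) * (c + s)).
Proof. intros. 
  assert (0 <= (a + s/3) * (s*(b+c) + s*s) - (s/3)*(b*c)).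
  { assert (b*c <= b) by nra. assert (0 <= s*(b+c)) by nra. assert (0<= s*s) by nra.
    assert ((a + s/3) * (s*(b+c) + s*s) >= (2/3)*(s*(b+c))) by nra. nra. }
  nra. Qed.
Lemma ov3 a b c s : 0 < s -> 2/3 <= a -> 2/3 <= b -> 2/3 <= c -> a <= 1 -> b <= 1 ->
  (c + 2*s/3) * (a * b) <= (c + s/3) * ((a + s/3) * (b + s/3)).
Proof. intros.
  assert (a*b <= (a+b)*c) by nra.
  assert ((c + s/3) * ((a + s/3) * (b + s/3)) - (c + 2*s/3) * (a * b)
     = (s/3)*((a+b)*c - a*b) + (s/3)*(s/3)*(a+b) + c*(s/3)*(s/3) + (s/3)^3) by (simpl; field).
  assert (0 <= (s/3)*((a+b)*c - a*b)) by nra.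
  assert (0 <= (s/3)*(s/3)*(a+b)) by (apply Rmult_le_pos; nra).
  assert (0 <= c*(s/3)*(s/3)) by (apply Rmult_le_pos; nra).
  assert (0 <= (s/3)^3) by (apply pow_le; lra). lra. Qed.
Lemma ov2 a b c s : 0 < s -> 2/3 <= a -> 2/3 <= b -> 2/3 <= c -> a <= 1 -> c <= 1 ->
  (b + 2*s/3) * (a * c) <= (b + s/3) * ((a + s/3) * (c + s)).
Proof. intros. pose proof (ov3 a c b s). 
  assert ((a + s/3) * (c + s/3) <= (a + s/3) * (c + s)) by nra. nra. Qed.

Lemma round x l1 l2 l3 s : 0 < s -> inv x l1 l2 l3 s ->
  let l1' := nxt x l1 s ((l2 + s) * (l3 + s)) in
  let l2' := nxt x l2 s ((l1' + s/3) * (l3 + s)) in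
  inv x l1' l2' (nxt x l3 s ((l1' + s/3) * (l2' + s/3))) (s/3).
Proof.
  intros Hs (H1 & H2 & H3 & U1 & U2 & U3 & Lo & Hi) l1' l2'.
  assert (A1 : l1' * (l2 * l3) <= x <= (l1' + s/3) * ((l2 + s) * (l3 + s))).
  { apply nxt_ok; [lra | | apply ov1; lra].
    rewrite <- !Rmult_assoc. lra. }
  destruct (nxt_range x l1 s ((l2 + s) * (l3 + s)) Hs) as [R1 R1'].
  fold l1' in R1, R1'.
  assert (A2 : l2' * (l1' * l3) <= x <= (l2' + s/3) * ((l1' + s/3) * (l3 + s))).
  { apply nxt_ok; [lra | | apply ov2; lra].
    split.
    - replace (l2 * (l1' * l3)) with (l1' * (l2 * l3)) by ring. lra.
    - replace ((l2 + s) * ((l1' + s / 3) * (l3 + s))) with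
        ((l1' + s/3) * ((l2 + s) * (l3 + s))) by ring. lra. }
  destruct (nxt_range x l2 s ((l1' + s/3) * (l3 + s)) Hs) as [R2 R2'].
  fold l2' in R2, R2'.
  set (l3' := nxt x l3 s ((l1' + s/3) * (l2' + s/3))).
  assert (A3 : l3' * (l1' * l2') <= x <= (l3' + s/3) * ((l1' + s/3) * (l2' + s/3))).
  { apply nxt_ok; [lra | | apply ov3; lra].
    split.
    - replace (l3 * (l1' * l2')) with (l2' * (l1' * l3)) by ring. lra.
    - replace ((l3 + s) * ((l1' + s / 3) * (l2' + s / 3))) with
        ((l2' + s/3) * ((l1' + s/3) * (l3 + s))) by ring. lra. }
  destruct (nxt_range x l3 s ((l1' + s/3) * (l2' + s/3)) Hs) as [R3 R3'].
  fold l3' in R3, R3'.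
  unfold inv. repeat split; lra.
Qed.

Lemma coord_cantor (L : nat -> R) : L 0%nat = 2/3 ->
  (forall m, exists c, (c = 0 \/ c = 2) /\ L (S m) = L m + c * (/3) ^ S m / 3) ->
  exists a, cantor a /\ forall m, L m <= a <= L m + (/3) ^ S m.
Proof.
  intros H0 HS.
  set (t := fun i => match i with O => 2 | S k => (L (S k) - L k) * 3 ^ S (S k) end).
  assert (Ht : forall i, t i = 0 \/ t i = 2).
  { intros [|k]; [right; reflexivity|]. change (t (S k)) with ((L (S k) - L k) * 3 ^ S (S k)).
    destruct (HS k) as [c [Hc E]]. rewrite E.
    replace ((L k + c * (/ 3) ^ S k / 3 - L k) * 3 ^ S (S k)) with c.
    - exact Hc.
    - rewrite pow_inv. simpl. field. apply pow_nonzero. lra. }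
  assert (Hs : forall m, sum_f_R0 (fun i => t i / 3 ^ S i) m = L m).
  { induction m as [|m IH]; cbn [sum_f_R0].
    - rewrite H0. simpl. field.
    - rewrite IH. change (t (S m)) with ((L (S m) - L m) * 3 ^ S (S m)). field. apply pow_nonzero. lra. }
  destruct (series_bound t Ht) as [a [Ha Hb]].
  exists a. split.
  - exists t. split; assumption.
  - intro m. rewrite <- Hs. apply Hb.
Qed.

Definition L1 x m := fst (fst (st x m)).
Definition L2 x m := snd (fst (st x m)).
Definition L3 x m := snd (st x m).

Lemma st_inv x : (2/3)^3 <= x <= 1 -> forall m,
  inv x (L1 x m) (L2 x m) (L3 x m) ((/3) ^ S m).
Proof.
  intros Hx m. unfold L1, L2, L3. induction m as [|m IH].
  - simpl. unfold inv. simpl in Hx. lra.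
  - cbn [st]. destruct (st x m) as [[l1 l2] l3]. cbn [fst snd] in *.
    rewrite (q_S (S m)). apply round; [apply q_pos | exact IH].
Qed.

Lemma st_digits x m :
  (exists c, (c = 0 \/ c = 2) /\ L1 x (S m) = L1 x m + c * (/3) ^ S m / 3) /\
  (exists c, (c = 0 \/ c = 2) /\ L2 x (S m) = L2 x m + c * (/3) ^ S m / 3) /\
  (exists c, (c = 0 \/ c = 2) /\ L3 x (S m) = L3 x m + c * (/3) ^ S m / 3).
Proof.
  unfold L1, L2, L3. cbn [st]. destruct (st x m) as [[l1 l2] l3]. cbn [fst snd].
  split; [|split]; apply nxt_digit.
Qed.

Theorem theorem2 :
  forall x : R, (8/9)^3 <= x <= 8/9 ->
    exists a b c d : R,
      cantor a /\ cantor b /\ cantor c /\ cantor d /\ x = a * b * c * d.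
Proof.
  intros x Hx.
  assert (Hx' : (2/3)^3 <= x <= 1) by (simpl in *; lra).
  destruct (coord_cantor (L1 x)) as [a [Ca Ba]];
    [reflexivity | intro m; apply (st_digits x m) |].
  destruct (coord_cantor (L2 x)) as [b [Cb Bb]];
    [reflexivity | intro m; apply (st_digits x m) |].
  destruct (coord_cantor (L3 x)) as [c [Cc Bc]];
    [reflexivity | intro m; apply (st_digits x m) |].
  exists a, b, c, 1. repeat split; try assumption; [apply one_cantor|].
  rewrite Rmult_1_r.
  assert (Hm : forall m, Rabs (x - a * b * c) <= 3 * (/3) ^ S m).
  { intro m. destruct (st_inv x Hx' m) as (H1 & H2 & H3 & U1 & U2 & U3 & Lo & Hi).
    specialize (Ba m). specialize (Bb m). specialize (Bc m).
    set (s := (/3) ^ S m) in *. assert (0 < s) by apply q_pos.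
    set (l1 := L1 x m) in *. set (l2 := L2 x m) in *. set (l3 := L3 x m) in *.
    assert (P1 : l1 * l2 <= a * b) by (apply Rmult_le_compat; lra).
    assert (P2 : l1 * l2 * l3 <= a * b * c) by (apply Rmult_le_compat; nra).
    assert (Q1 : a * b <= (l1 + s) * (l2 + s)) by (apply Rmult_le_compat; lra).
    assert (Q2 : a * b * c <= (l1 + s) * (l2 + s) * (l3 + s))
      by (apply Rmult_le_compat; nra).
    assert (D : (l1 + s) * (l2 + s) * (l3 + s) - l1 * l2 * l3 <= 3 * s).
    { replace ((l1 + s) * (l2 + s) * (l3 + s) - l1 * l2 * l3) with
        (s * ((l2 + s) * (l3 + s)) + s * (l1 * (l3 + s)) + s * (l1 * l2)) by ring.
      assert ((l2 + s) * (l3 + s) <= 1) by nra.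
      assert (l1 * (l3 + s) <= 1) by nra.
      assert (l1 * l2 <= 1) by nra.
      nra. }
    apply Rabs_le. lra. }
  destruct (Req_dec x (a * b * c)) as [E|E]; [exact E|exfalso].
  destruct (pow_lt_1_zero (/3) ltac:(rewrite Rabs_pos_eq; lra) (Rabs (x - a * b * c)))
    as [N HN]; [apply Rabs_pos_lt; lra|].
  specialize (HN N ltac:(lia)). specialize (Hm N).
  rewrite Rabs_pos_eq in HN by (apply Rlt_le, q_pos).
  rewrite q_S in Hm. lra.
Qed.
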